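(* Let $(\mathcal{X},\rho)$ be a separable metric space with Borel $\sigma$-algebra $\mathcal{B}$, and let $\mathbb{X}$ be a process satisfying condition $\mathrm{FMV}$. Then for any $\delta,\varepsilon>0$ and $m_0\in\mathbb{N}$ there exist $M\in\mathbb{N}$ with $M\ge m_0$ and sets $G_1,\dots,G_M\in\mathcal{B}$ that are pairwise disjoint, each satisfying $\sup_{x,x'\in G_i}\rho(x,x')\le\delta$, and such that $\mathbb{P}\big(\exists t:\ X_t\in\mathcal{X}\setminus\bigcup_{i=1}^M G_i\big)<\varepsilon$.
   Context: $\mathrm{FMV}$: the set of processes $\mathbb{X}=(X_t)_{t\ge1}$ in $\mathcal{X}$ such that for every countable partition $\{A_k\}_{k\ge1}$ of $\mathcal{X}$ into sets of $\mathcal{B}$, almost surely $\#\{k:\exists t,\ X_t\in A_k\}<\infty$. *)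

(* Defs.v *)
From HB Require Import structures.
From mathcomp Require Import all_boot all_order all_algebra.
From mathcomp Require Import all_classical all_reals all_analysis.
Set Implicit Arguments. Unset Strict Implicit. Unset Printing Implicit Defensive.
Import Order.TTheory GRing.Theory Num.Theory.
Local Open Scope classical_set_scope.
Local Open Scope ring_scope.

Definition is_metric (R : realType) (X : Type) (rho : X -> X -> R) : Prop :=
  [/\ forall x y, 0 <= rho x y,
      forall x y, rho x y = 0 <-> x = y,
      forall x y, rho x y = rho y x &
      forall x y z, rho x z <= rho x y + rho y z].

Definition metric_open (R : realType) (X : Type) (rho : X -> X -> R) : set (set X) :=
  [set A | forall x, A x -> exists2 r : R, 0 < r & [set y | rho x y < r] `<=` A].

Definition metric_separable (R : realType) (X : Type) (rho : X -> X -> R) : Prop :=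
  exists D : set X, countable D /\
    forall x (e : R), 0 < e -> exists2 y, D y & rho x y < e.

Definition is_borel_of (R : realType) (d : measure_display) (X : measurableType d)
  (rho : X -> X -> R) : Prop :=
  (@measurable d X) = <<s metric_open rho >>.

Definition FMV (R : realType) (d : measure_display) (X : measurableType d)
  (dO : measure_display) (Omega : measurableType dO) (P : probability Omega R)
  (Xp : nat -> Omega -> X) : Prop :=
  forall A : nat -> set X,
    (forall k, measurable (A k)) ->
    trivIset setT A ->
    \bigcup_k A k = setT ->
    {ae P, forall w, finite_set [set k | exists t, A k (Xp t w)]}.

(* Main.v *)
Require Import Defs.
From HB Require Import structures.
From mathcomp Require Import all_boot all_order all_algebra.
From mathcomp Require Import all_classical all_reals all_analysis.
From mathcomp Require Import finmap.
Import Order.TTheory GRing.Theory Num.Theory.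
Local Open Scope classical_set_scope.
Local Open Scope ring_scope.

Lemma fin_nat_ub (S : set nat) : finite_set S -> exists N, forall k, S k -> (k < N)%N.
Proof.
move=> fS; exists (\max_(k <- fset_set S) k).+1 => k Sk.
rewrite ltnS; apply: leq_bigmax_seq => //.
by rewrite in_fset_set //; apply/mem_set.
Qed.

Theorem lemma9 (R : realType) (d : measure_display) (X : measurableType d)
  (rho : X -> X -> R)
  (hmetric : is_metric rho) (hsep : metric_separable rho)
  (hborel : is_borel_of rho)
  (dO : measure_display) (Omega : measurableType dO) (P : probability Omega R)
  (Xp : nat -> Omega -> X)
  (hmeas : forall t, measurable_fun setT (Xp t))
  (hfmv : FMV P Xp) :
  forall (delta eps : R), 0 < delta -> 0 < eps -> forall m0 : nat,
  exists (M : nat) (G : nat -> set X),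
    [/\ (m0 <= M)%N,
        forall i, (i < M)%N -> measurable (G i),
        forall i j, (i < M)%N -> (j < M)%N -> i <> j -> G i `&` G j = set0,
        forall i, (i < M)%N -> forall x x', G i x -> G i x' -> rho x x' <= delta &
        (P [set w | exists t, (~` \bigcup_(i in [set i | (i < M)%N]) G i) (Xp t w)]
           < eps%:E)%E].
Proof.
move=> delta eps hd he m0.
case: hmetric => rho0 rhoeq rhosym rhotri.
case: hsep => D [cD dD]; case/countable_injP: cD => f finj.
pose r := delta / 2.
have r0 : 0 < r by rewrite divr_gt0.
pose B k := [set x | exists2 y, D y /\ f y = k & rho y x < r].
have Bopen k : metric_open rho (B k).
  move=> x [y [Dy fy] ryx]; exists (r - rho y x); first by rewrite subr_gt0.
  move=> z /= hz; exists y => //.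
  by apply: (le_lt_trans (rhotri y x z)); rewrite -ltrBrDl.
have Bmeas k : measurable (B k).
  by rewrite hborel; apply: sub_sigma_algebra; apply: Bopen.
pose A := seqDU B.
have Ameas k : measurable (A k) := seqDU_measurable Bmeas k.
have Acov : \bigcup_k A k = setT.
  rewrite -seqDU_bigcup_eq; apply/seteqP; split => // x _.
  have [y Dy rxy] := dD x r r0; exists (f y) => //; exists y => //.
  by rewrite rhosym.
have Adiam i x x' : A i x -> A i x' -> rho x x' <= delta.
  move=> /(@subset_seqDU _ B i x) [y [Dy fy] ryx] /(@subset_seqDU _ B i x') [y' [Dy' fy'] ryx'].
  have yy : y = y' by apply: finj; [exact/mem_set|exact/mem_set|by rewrite fy fy'].
  subst y'.
  apply: (le_trans (rhotri x y x')); rewrite rhosym.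
  have -> : delta = r + r by rewrite /r -splitr.
  by apply: lerD; apply: ltW.
pose U N := \bigcup_(i in [set i | (i < N)%N]) A i.
pose E N := [set w | exists t, (~` U N) (Xp t w)].
have Emeas N : measurable (E N).
  have -> : E N = \bigcup_t (Xp t @^-1` (~` U N)).
    by apply/seteqP; split => w; [case=> t h; exists t | case=> t _ h; exists t].
  apply: bigcupT_measurable => t; rewrite -[X in measurable X]setTI.
  apply: (hmeas t measurableT); apply: measurableC.
  by apply: bigcup_measurable => k _.
have Edec : nonincreasing_seq E.
  move=> n m nm; apply/subsetPset => w [t Ht]; exists t => HU; apply: Ht.
  case: HU => k kn Ak; exists k => //=; exact: leq_trans kn nm.
have [N0 [mN0 PN0 sub]] := hfmv A Ameas (trivIset_seqDU B) Acov.
have Ecap : \bigcap_n E n `<=` N0.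
  move=> w Hw; apply: sub => /= Hfin.
  have [N HN] := fin_nat_ub _ Hfin.
  have [t Ht] := Hw N I; apply: Ht.
  have : [set: X] (Xp t w) by [].
  rewrite -Acov => -[k _ Ak]; exists k => //; by apply: HN; exists t.
have mcap : measurable (\bigcap_n E n) by apply: bigcapT_measurable.
have cv := nonincreasing_cvg_mu (le_lt_trans (probability_le1 P (Emeas 0%N)) (ltry _)) Emeas mcap Edec.
have P0 : P (\bigcap_n E n) = 0%E.
  apply: le_anti; rewrite measure_ge0 andbT -PN0.
  by apply: le_measure => //; apply: mem_set.
have := cv [set y | (y < eps%:E)%E]; case.
  apply: open_nbhs_nbhs; split; first exact: open_ereal_lt_ereal.
  apply: (@le_lt_trans _ _ 0%E); last by rewrite lte_fin.
  by rewrite -PN0; apply: le_measure => //; apply: mem_set.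
move=> N _ HN.
exists (maxn N m0), A; split.
- exact: leq_maxr.
- by move=> i _.
- move=> i j _ _ ij; apply/seteqP; split => // x [Ai Aj].
  by apply: ij; apply: (trivIset_seqDU B) => //; exists x.
- by move=> i _; apply: Adiam.
- exact: (HN (maxn N m0) (leq_maxl _ _)).
Qed.
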